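(* Let $\Gamma$ be a group and $S$ a $\Gamma$-graded inverse semigroup. The following are equivalent: (1) $S$ is locally strongly graded; (2) for all $\alpha\in\Gamma$ and $u\in E(S)\setminus\{0\}$ there is $v\in E(S)_\alpha\setminus\{0\}$ with $v\le u$; (3) for all $\alpha,\beta\in\Gamma$ and $s\in S_{\alpha\beta}\setminus\{0\}$ there is $u\in E(S)\setminus\{0\}$ with $u\le s^{-1}s$ and $su\in S_\alpha S_\beta$; (4) for all $\alpha,\beta\in\Gamma$ and $s\in S_{\alpha\beta}\setminus\{0\}$ there is $u\in E(S)\setminus\{0\}$ with $u\le ss^{-1}$ and $us\in S_\alpha S_\beta$.
   Context: Semigroups have a zero; $S$ is $\Gamma$-graded via $\deg:S\setminus\{0\}\to\Gamma$ with $\deg(st)=\deg(s)\deg(t)$ whenever $st\neq0$; $S_\alpha=\deg^{-1}(\alpha)\cup\{0\}$. $E(S)$ is the set of idempotents, $E(S)_\alpha=\{ss^{-1}:s\in S_\alpha\}$. Natural partial order: $s\le t$ iff $s=tu$ for some $u\in E(S)$. $S$ is locally strongly graded if for all $\alpha,\beta\in\Gamma$ and $s\in S_{\alpha\beta}\setminus\{0\}$ there exists $t\in S_\alpha S_\beta\setminus\{0\}$ with $t\le s$. *)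

(* Defs.v *)
Set Implicit Arguments.

Record Group := {
  g_carrier :> Type;
  g_mul : g_carrier -> g_carrier -> g_carrier;
  g_one : g_carrier;
  g_inv : g_carrier -> g_carrier;
  g_mulA : forall a b c, g_mul a (g_mul b c) = g_mul (g_mul a b) c;
  g_mul1l : forall a, g_mul g_one a = a;
  g_mulVl : forall a, g_mul (g_inv a) a = g_one
}.

Record InvSemigroup0 := {
  s_carrier :> Type;
  s_mul : s_carrier -> s_carrier -> s_carrier;
  s_zero : s_carrier;
  s_inv : s_carrier -> s_carrier;
  s_mulA : forall a b c, s_mul a (s_mul b c) = s_mul (s_mul a b) c;
  s_mul0l : forall a, s_mul s_zero a = s_zero;
  s_mul0r : forall a, s_mul a s_zero = s_zero;
  s_inv_l : forall s, s_mul (s_mul s (s_inv s)) s = s;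
  s_inv_r : forall s, s_mul (s_mul (s_inv s) s) (s_inv s) = s_inv s;
  s_inv_uniq : forall s t, s_mul (s_mul s t) s = s -> s_mul (s_mul t s) t = t ->
                 t = s_inv s
}.

Arguments g_mul {_}. Arguments g_one {_}. Arguments g_inv {_}.
Arguments s_mul {_}. Arguments s_zero {_}. Arguments s_inv {_}.

Section Graded.
Context {G : Group} {S : InvSemigroup0}.

(** deg : S \ {0} -> G, represented as a total function whose value at 0 is
    irrelevant; multiplicativity is required only for nonzero products. *)
Definition is_grading (deg : S -> G) : Prop :=
  forall s t : S, s_mul s t <> s_zero -> deg (s_mul s t) = g_mul (deg s) (deg t).

Definition homog (deg : S -> G) (a : G) (s : S) : Prop :=
  s = s_zero \/ (s <> s_zero /\ deg s = a).

Definition idem (e : S) : Prop := s_mul e e = e.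

Definition idem_deg (deg : S -> G) (a : G) (e : S) : Prop :=
  exists s, homog deg a s /\ e = s_mul s (s_inv s).

Definition nat_le (s t : S) : Prop := exists u, idem u /\ s = s_mul t u.

Definition prod_homog (deg : S -> G) (a b : G) (t : S) : Prop :=
  exists x y, homog deg a x /\ homog deg b y /\ t = s_mul x y.

Definition locally_strongly_graded (deg : S -> G) : Prop :=
  forall (a b : G) (s : S), homog deg (g_mul a b) s -> s <> s_zero ->
    exists t, prod_homog deg a b t /\ t <> s_zero /\ nat_le t s.

End Graded.

(* Main.v *)
Require Import Defs.
Local Notation "x ** y" := (s_mul x y) (at level 40, left associativity).

Lemma idem_r (S : InvSemigroup0) (f x : S) : idem f -> x ** f ** f = x ** f.
Proof. intro H. rewrite <- s_mulA. now rewrite H. Qed.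

Lemma inv_inv (S : InvSemigroup0) (s : S) : s_inv (s_inv s) = s.
Proof. symmetry. apply s_inv_uniq. apply s_inv_r. apply s_inv_l. Qed.

Lemma idem_inv (S : InvSemigroup0) (e : S) : idem e -> s_inv e = e.
Proof. intro H. symmetry. apply s_inv_uniq; now rewrite !H. Qed.

Lemma idem_mul (S : InvSemigroup0) (e f : S) : idem e -> idem f -> idem (e ** f).
Proof.
  intros He Hf. set (x := s_inv (e ** f)).
  assert (Hx : f ** x ** e = x).
  { apply s_inv_uniq.
    - rewrite !s_mulA. rewrite (idem_r _ f e Hf). rewrite (idem_r _ e (e ** f ** x) He).
      replace (e ** f ** x ** e ** f) with ((e ** f) ** x ** (e ** f)) by (rewrite !s_mulA; reflexivity).
      apply s_inv_l.
    - replace (f ** x ** e ** (e ** f) ** (f ** x ** e)) with (f ** (x ** (e ** f) ** x) ** e)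
        by (rewrite ?s_mulA; repeat (first [rewrite (idem_r _ e _ He) | rewrite (idem_r _ f _ Hf)]); reflexivity).
      unfold x. now rewrite s_inv_r. }
  assert (Hxi : idem x).
  { unfold idem. transitivity ((f ** x ** e) ** (f ** x ** e)); [now rewrite Hx|].
    replace (f ** x ** e ** (f ** x ** e)) with (f ** (x ** (e ** f) ** x) ** e) by (rewrite !s_mulA; reflexivity).
    unfold x. rewrite s_inv_r. exact Hx. }
  rewrite <- (inv_inv _ (e ** f)). fold x. now rewrite (idem_inv _ _ Hxi).
Qed.

Lemma rr_idem (S : InvSemigroup0) (s : S) : idem (s ** s_inv s).
Proof. unfold idem. rewrite s_mulA. now rewrite s_inv_l. Qed.

Lemma ll_idem (S : InvSemigroup0) (s : S) : idem (s_inv s ** s).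
Proof. unfold idem. rewrite !s_mulA. now rewrite s_inv_r. Qed.

Lemma idem_comm (S : InvSemigroup0) (e f : S) : idem e -> idem f -> e ** f = f ** e.
Proof.
  intros He Hf. assert (H := idem_mul _ _ _ He Hf).
  rewrite <- (idem_inv _ _ H). symmetry. apply s_inv_uniq.
  - rewrite ?s_mulA; repeat (first [rewrite (idem_r _ e _ He) | rewrite (idem_r _ f _ Hf)]).
    rewrite <- s_mulA. exact H.
  - rewrite ?s_mulA; repeat (first [rewrite (idem_r _ e _ He) | rewrite (idem_r _ f _ Hf)]).
    rewrite <- s_mulA. exact (idem_mul _ _ _ Hf He).
Qed.

Lemma le_idem (S : InvSemigroup0) (u e : S) : idem u -> idem e -> nat_le u e -> e ** u = u.
Proof.
  intros Hu He [w [Hw ->]]. now rewrite s_mulA, He.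
Qed.

Lemma es_lemma (S : InvSemigroup0) (e s : S) : idem e ->
  e ** s = s ** (s_inv s ** e ** s) /\ idem (s_inv s ** e ** s).
Proof.
  intro He. split.
  - rewrite !s_mulA. rewrite <- (idem_comm _ _ _ He (rr_idem _ s)).
    rewrite <- (s_mulA _ e _ s). now rewrite s_inv_l.
  - unfold idem.
    replace (s_inv s ** e ** s ** (s_inv s ** e ** s)) with (s_inv s ** (e ** (s ** s_inv s)) ** e ** s)
      by (rewrite ?s_mulA; reflexivity).
    rewrite (idem_comm _ _ _ He (rr_idem _ s)).
    rewrite ?s_mulA. rewrite (idem_r _ e _ He).
    replace (s_inv s ** s ** s_inv s) with (s_inv s) by (symmetry; apply s_inv_r). reflexivity.
Qed.

Lemma g_cancel (G : Group) (c a b : G) : g_mul c a = g_mul c b -> a = b.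
Proof.
  intro H. rewrite <- (g_mul1l _ a), <- (g_mul1l _ b), <- (g_mulVl _ c), <- !g_mulA.
  now rewrite H.
Qed.

Lemma g_mul1r (G : Group) (a : G) : g_mul a g_one = a.
Proof.
  apply (g_cancel _ (g_inv a)). rewrite g_mulA, g_mulVl. now rewrite g_mul1l.
Qed.

Lemma g_mulVr (G : Group) (a : G) : g_mul a (g_inv a) = g_one.
Proof.
  apply (g_cancel _ (g_inv a)). rewrite g_mulA, g_mulVl, g_mul1l. now rewrite g_mul1r.
Qed.

Lemma nz_l (S : InvSemigroup0) (x y : S) : x ** y <> s_zero -> x <> s_zero.
Proof. intros H ->. apply H, s_mul0l. Qed.
Lemma nz_r (S : InvSemigroup0) (x y : S) : x ** y <> s_zero -> y <> s_zero.
Proof. intros H ->. apply H, s_mul0r. Qed.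

Lemma deg_idem (G : Group) (S : InvSemigroup0) (deg : S -> G) : is_grading deg ->
  forall e, idem e -> e <> s_zero -> deg e = g_one.
Proof.
  intros Hd e He Hn. assert (H := Hd e e). rewrite He in H. specialize (H Hn).
  symmetry. apply (g_cancel _ (deg e)). now rewrite g_mul1r.
Qed.

Lemma deg_inv (G : Group) (S : InvSemigroup0) (deg : S -> G) : is_grading deg ->
  forall x, x ** s_inv x <> s_zero -> deg (s_inv x) = g_inv (deg x).
Proof.
  intros Hd x Hn. apply (g_cancel _ (deg x)). rewrite g_mulVr, <- (Hd _ _ Hn).
  exact (deg_idem _ _ _ Hd _ (rr_idem _ x) Hn).
Qed.

Lemma nz_rr (S : InvSemigroup0) (s : S) : s <> s_zero -> s ** s_inv s <> s_zero.
Proof. intros H H0. apply H. transitivity (s ** s_inv s ** s). symmetry; apply s_inv_l. rewrite H0. apply s_mul0l. Qed.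

Lemma inv_mul (S : InvSemigroup0) (s t : S) : s_inv (s ** t) = s_inv t ** s_inv s.
Proof.
  symmetry. apply s_inv_uniq.
  - replace (s ** t ** (s_inv t ** s_inv s) ** (s ** t)) with (s ** ((t ** s_inv t) ** (s_inv s ** s)) ** t)
      by (rewrite ?s_mulA; reflexivity).
    rewrite (idem_comm _ _ _ (rr_idem _ t) (ll_idem _ s)). rewrite ?s_mulA.
    rewrite (s_inv_l S s). rewrite <- (s_mulA S s t (s_inv t)), <- (s_mulA S s _ t). now rewrite (s_inv_l S t).
  - replace (s_inv t ** s_inv s ** (s ** t) ** (s_inv t ** s_inv s))
      with (s_inv t ** ((s_inv s ** s) ** (t ** s_inv t)) ** s_inv s)
      by (rewrite ?s_mulA; reflexivity).
    rewrite <- (idem_comm _ _ _ (rr_idem _ t) (ll_idem _ s)). rewrite ?s_mulA.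
    rewrite (s_inv_r S t). rewrite <- (s_mulA S (s_inv t) (s_inv s) s), <- (s_mulA S (s_inv t) _ (s_inv s)). now rewrite (s_inv_r S s).
Qed.

Lemma homog_nz (G : Group) (S : InvSemigroup0) (deg : S -> G) a x :
  homog deg a x -> x <> s_zero -> deg x = a.
Proof. intros [H|[_ H]] Hn; [contradiction|exact H]. Qed.

From Stdlib Require Import Classical.

Lemma p1p2 (G : Group) (S : InvSemigroup0) (deg : S -> G) (Hd : is_grading deg) :
  locally_strongly_graded deg ->
  forall (a : G) (u : S), idem u -> u <> s_zero ->
    exists v, idem_deg deg a v /\ v <> s_zero /\ nat_le v u.
Proof.
  intros P a u Hu Hun.
  assert (Hh : homog deg (g_mul a (g_inv a)) u).
  { right. split; [exact Hun|]. rewrite g_mulVr. exact (deg_idem _ _ _ Hd _ Hu Hun). }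
  destruct (P _ _ _ Hh Hun) as [t [[x [y [Hx [Hy ->]]]] [Htn [w [Hw Hle]]]]].
  assert (Ht : idem (x ** y)) by (rewrite Hle; exact (idem_mul _ _ _ Hu Hw)).
  exists (x ** y). split; [|split; [exact Htn| exists w; auto]].
  set (e := y ** s_inv y).
  assert (He : idem e) by apply rr_idem.
  assert (Heq : x ** y = (x ** e) ** s_inv (x ** e)).
  { rewrite inv_mul, (idem_inv _ _ He).
    transitivity ((x ** y) ** s_inv (x ** y)).
    - rewrite (idem_inv _ _ Ht). symmetry. exact Ht.
    - rewrite inv_mul. unfold e. rewrite ?s_mulA.
      rewrite <- (s_mulA S (x ** y) (s_inv y) y). rewrite <- (s_mulA S x y (s_inv y ** y)).
      rewrite (s_mulA S y (s_inv y) y). rewrite (s_inv_l S y). reflexivity. }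
  exists (x ** e). split; [|exact Heq].
  assert (Hz : x ** e <> s_zero).
  { intro H0. apply Htn. rewrite Heq, H0. apply s_mul0l. }
  right. split; [exact Hz|]. rewrite (Hd _ _ Hz).
  rewrite (homog_nz _ _ _ _ _ Hx (nz_l _ _ _ Hz)).
  rewrite (deg_idem _ _ _ Hd _ He (nz_r _ _ _ Hz)). apply g_mul1r.
Qed.

Lemma p2p1 (G : Group) (S : InvSemigroup0) (deg : S -> G) (Hd : is_grading deg) :
  (forall (a : G) (u : S), idem u -> u <> s_zero ->
    exists v, idem_deg deg a v /\ v <> s_zero /\ nat_le v u) ->
  locally_strongly_graded deg.
Proof.
  intros P a b s Hs Hsn.
  destruct (P a (s ** s_inv s) (rr_idem _ s) (nz_rr _ _ Hsn))
    as [v [[x [Hx ->]] [Hvn Hvle]]].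
  assert (Hv : idem (x ** s_inv x)) by apply rr_idem.
  destruct (es_lemma _ (x ** s_inv x) s Hv) as [Heq Hid].
  exists ((x ** s_inv x) ** s). split; [|split].
  - exists x, (s_inv x ** s). split; [exact Hx|split; [|symmetry; apply s_mulA]].
    destruct (classic (s_inv x ** s = s_zero)) as [H0|H0]; [left; exact H0|].
    right. split; [exact H0|]. rewrite (Hd _ _ H0).
    rewrite (deg_inv _ _ _ Hd _ Hvn).
    assert (Hxn : x <> s_zero) by exact (nz_l _ _ _ Hvn).
    rewrite (homog_nz _ _ _ _ _ Hx Hxn), (homog_nz _ _ _ _ _ Hs Hsn).
    rewrite g_mulA, g_mulVl. apply g_mul1l.
  - intro H0. apply Hvn.
    assert (H1 : (x ** s_inv x) ** s ** s_inv s = x ** s_inv x).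
    { rewrite <- s_mulA. rewrite (idem_comm _ _ _ Hv (rr_idem _ s)).
      exact (le_idem _ _ _ Hv (rr_idem _ s) Hvle). }
    rewrite <- H1, H0. apply s_mul0l.
  - rewrite Heq. exists (s_inv s ** (x ** s_inv x) ** s). split; auto.
Qed.

Lemma p1p3 (G : Group) (S : InvSemigroup0) (deg : S -> G) :
  locally_strongly_graded deg ->
  forall (a b : G) (s : S), homog deg (g_mul a b) s -> s <> s_zero ->
              exists u, idem u /\ u <> s_zero /\
                nat_le u (s_mul (s_inv s) s) /\ prod_homog deg a b (s_mul s u).
Proof.
  intros P a b s Hs Hsn.
  destruct (P _ _ _ Hs Hsn) as [t [Ht [Htn [w [Hw Hle]]]]].
  assert (H1 : s ** (s_inv s ** s ** w) = t) by (rewrite ?s_mulA, (s_inv_l S s); auto).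
  exists (s_inv s ** s ** w). split; [exact (idem_mul _ _ _ (ll_idem _ s) Hw)|split; [|split]].
  - intro H0. apply Htn. rewrite <- H1, H0. apply s_mul0r.
  - exists w; auto.
  - rewrite H1. exact Ht.
Qed.

Lemma p3p1 (G : Group) (S : InvSemigroup0) (deg : S -> G) :
  (forall (a b : G) (s : S), homog deg (g_mul a b) s -> s <> s_zero ->
              exists u, idem u /\ u <> s_zero /\
                nat_le u (s_mul (s_inv s) s) /\ prod_homog deg a b (s_mul s u)) ->
  locally_strongly_graded deg.
Proof.
  intros P a b s Hs Hsn.
  destruct (P _ _ _ Hs Hsn) as [u [Hu [Hun [Hle Hp]]]].
  exists (s ** u). split; [exact Hp|split; [|exists u; auto]].
  intro H0. apply Hun. rewrite <- (le_idem _ _ _ Hu (ll_idem _ s) Hle).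
  rewrite <- s_mulA, H0. apply s_mul0r.
Qed.

Lemma p1p4 (G : Group) (S : InvSemigroup0) (deg : S -> G) :
  locally_strongly_graded deg ->
  forall (a b : G) (s : S), homog deg (g_mul a b) s -> s <> s_zero ->
              exists u, idem u /\ u <> s_zero /\
                nat_le u (s_mul s (s_inv s)) /\ prod_homog deg a b (s_mul u s).
Proof.
  intros P a b s Hs Hsn.
  destruct (P _ _ _ Hs Hsn) as [t [Ht [Htn [w [Hw Hle]]]]].
  assert (Hc : w ** (s_inv s ** s) = s_inv s ** s ** w) by exact (idem_comm _ _ _ Hw (ll_idem _ s)).
  assert (H1 : s ** w ** s_inv s ** s = t).
  { replace (s ** w ** s_inv s ** s) with (s ** (w ** (s_inv s ** s))) by (rewrite ?s_mulA; reflexivity). rewrite Hc, ?s_mulA, (s_inv_l S s). auto. }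
  assert (Hu : idem (s ** w ** s_inv s)).
  { unfold idem. replace (s ** w ** s_inv s ** (s ** w ** s_inv s)) with (s ** (w ** (s_inv s ** s)) ** w ** s_inv s)
      by (rewrite ?s_mulA; reflexivity).
    rewrite Hc, ?s_mulA, (s_inv_l S s), (idem_r S w s Hw). reflexivity. }
  exists (s ** w ** s_inv s). split; [exact Hu|split; [|split]].
  - intro H0. apply Htn. rewrite <- H1, H0. apply s_mul0l.
  - exists (s ** w ** s_inv s). split; [exact Hu|]. rewrite ?s_mulA, (s_inv_l S s). reflexivity.
  - rewrite H1. exact Ht.
Qed.

Lemma p4p1 (G : Group) (S : InvSemigroup0) (deg : S -> G) :
  (forall (a b : G) (s : S), homog deg (g_mul a b) s -> s <> s_zero ->
              exists u, idem u /\ u <> s_zero /\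
                nat_le u (s_mul s (s_inv s)) /\ prod_homog deg a b (s_mul u s)) ->
  locally_strongly_graded deg.
Proof.
  intros P a b s Hs Hsn.
  destruct (P _ _ _ Hs Hsn) as [u [Hu [Hun [Hle Hp]]]].
  destruct (es_lemma _ u s Hu) as [Heq Hid].
  exists (u ** s). split; [exact Hp|split].
  - intro H0. apply Hun.
    assert (H1 : u ** s ** s_inv s = u).
    { rewrite <- s_mulA. rewrite (idem_comm _ _ _ Hu (rr_idem _ s)).
      exact (le_idem _ _ _ Hu (rr_idem _ s) Hle). }
    rewrite <- H1, H0. apply s_mul0l.
  - rewrite Heq. exists (s_inv s ** u ** s). split; auto.
Qed.

Theorem proposition2p15 (G : Group) (S : InvSemigroup0) (deg : S -> G)
  (Hdeg : is_grading deg) :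
  let P1 := locally_strongly_graded deg in
  let P2 := forall (a : G) (u : S), idem u -> u <> s_zero ->
              exists v, idem_deg deg a v /\ v <> s_zero /\ nat_le v u in
  let P3 := forall (a b : G) (s : S), homog deg (g_mul a b) s -> s <> s_zero ->
              exists u, idem u /\ u <> s_zero /\
                nat_le u (s_mul (s_inv s) s) /\ prod_homog deg a b (s_mul s u) in
  let P4 := forall (a b : G) (s : S), homog deg (g_mul a b) s -> s <> s_zero ->
              exists u, idem u /\ u <> s_zero /\
                nat_le u (s_mul s (s_inv s)) /\ prod_homog deg a b (s_mul u s) in
  (P1 <-> P2) /\ (P1 <-> P3) /\ (P1 <-> P4).
Proof.
  intros P1 P2 P3 P4; subst P1 P2 P3 P4.
  split; [split; [apply p1p2; exact Hdeg | apply p2p1; exact Hdeg]|].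
  split; split; [apply p1p3|apply p3p1|apply p1p4|apply p4p1].
Qed.
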